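(* Let $\lambda,\mu$ be strict partitions with $\mu\subseteq\lambda$. If the shifted skew diagram $\widetilde{\lambda/\mu}$ contains the three boxes $(i,j)$, $(i,j+1)$ and $(i+1,j+1)$ for some $i,j$, then $Q_{\lambda/\mu}$ is not $p$-positive.
   Context: For strict partitions $\mu\subseteq\lambda$, the shifted skew diagram $\widetilde{\lambda/\mu}$ is the set of boxes $(r,c)$ with $1\le r\le\ell(\lambda)$ and $r+\mu_r\le c\le r+\lambda_r-1$; $(r,c)$ means row $r$ (rows numbered top to bottom), column $c$. Let $\mathbf{P}'=\{1'<1<2'<2<\cdots\}$. A marked shifted tableau of shape $\widetilde{\lambda/\mu}$ is a filling of its boxes by letters of $\mathbf{P}'$ with rows and columns weakly increasing, each column containing at most one unmarked $k$ and each row at most one marked $k'$ for each $k$; its content counts entries $a$ with $|a|=i$. $Q_{\lambda/\mu}=\sum_T x^{c(T)}$ over all such tableaux. A symmetric function is $p$-positive if its expansion in the power sum basis $\{p_\nu\}$ has all coefficients nonnegative. *)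

(* Defs.v *)
From HB Require Import structures.
From mathcomp Require Import all_boot all_order all_algebra.
Unset Printing Implicit Defensive.
Import Order.TTheory GRing.Theory Num.Theory.

Definition strict_partition (l : seq nat) : bool :=
  sorted (fun a b => b < a) l && all (fun x => 0 < x) l.

Definition is_partition (l : seq nat) : bool :=
  sorted geq l && all (fun x => 0 < x) l.

Definition subpart (mu la : seq nat) : bool :=
  (size mu <= size la) && all (fun i => nth 0 mu i <= nth 0 la i) (iota 0 (size mu)).

(* (r,c) (1-indexed rows) lies in the shifted skew diagram of la/mu:
   1 <= r <= l(la) and r + mu_r <= c <= r + la_r - 1. *)
Definition in_sdiag (la mu : seq nat) (b : nat * nat) : bool :=
  let: (r, c) := b in
  [&& 1 <= r, r <= size la, r + nth 0 mu r.-1 <= c & c < r + nth 0 la r.-1].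

Definition sboxes (la mu : seq nat) : seq (nat * nat) :=
  [seq b <- [seq (r, c) | r <- iota 1 (size la), c <- iota 0 (size la + head 0 la)]
     | in_sdiag la mu b].

Definition sbox (la mu : seq nat) := seq_sub (sboxes la mu).

(* Letters of P' with |a| <= N: (i, m) : 'I_N * bool stands for the letter
   (i+1)' if m, and (i+1) if ~~ m.  Order 1' < 1 < 2' < 2 < ... via the key. *)
Definition letter_key {N : nat} (a : 'I_N * bool) : nat := (a.1.+1).*2 - a.2.

Definition is_mtab {la mu : seq nat} {N : nat}
    (T : {ffun sbox la mu -> 'I_N * bool}) : bool :=
  [forall b1 : sbox la mu, forall b2 : sbox la mu,
    [&& (((val b1).1 == (val b2).1) && ((val b1).2 < (val b2).2))
          ==> (letter_key (T b1) <= letter_key (T b2)),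
        (((val b1).2 == (val b2).2) && ((val b1).1 < (val b2).1))
          ==> (letter_key (T b1) <= letter_key (T b2)),
        ([&& (val b1).2 == (val b2).2, (val b1).1 != (val b2).1,
             ~~ (T b1).2 & ~~ (T b2).2]) ==> ((T b1).1 != (T b2).1) &
        ([&& (val b1).1 == (val b2).1, (val b1).2 != (val b2).2,
             (T b1).2 & (T b2).2]) ==> ((T b1).1 != (T b2).1)]].

(* Coefficient of x_1^{alpha_1} ... x_N^{alpha_N} in Q_{la/mu}(x_1,...,x_N):
   number of marked shifted tableaux of shape la/mu with content alpha. *)
Definition Qcoef (la mu : seq nat) (N : nat) (alpha : 'I_N -> nat) : nat :=
  #|[set T : {ffun sbox la mu -> 'I_N * bool} |
      is_mtab T && [forall i : 'I_N, #|[set b | (T b).1 == i]| == alpha i]]|.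

(* Coefficient of x^alpha in p_nu(x_1,...,x_N) = prod_j (x_1^{nu_j}+...+x_N^{nu_j}). *)
Definition pcoef (N : nat) (nu : seq nat) (alpha : 'I_N -> nat) : nat :=
  #|[set f : {ffun 'I_(size nu) -> 'I_N} |
      [forall i : 'I_N, (\sum_(j < size nu | f j == i) nth 0 nu j) == alpha i]]|.

(* A symmetric function F, given by its monomial coefficients in N variables for
   every N, is p-positive if it is a nonnegative rational combination of power
   sums p_nu. *)
Definition p_positive (F : forall N : nat, ('I_N -> nat) -> nat) : Prop :=
  exists s : seq (rat * seq nat),
    all (fun cn => (0 <= cn.1)%R && is_partition cn.2) s /\
    forall (N : nat) (alpha : 'I_N -> nat),
      ((F N alpha)%:R = \sum_(cn <- s) cn.1 * (@pcoef N cn.2 alpha)%:R)%R.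

(* Main.v *)
Require Import Defs.
From mathcomp Require Import all_boot all_order all_algebra.
From mathcomp Require Import zify.
Import Order.TTheory GRing.Theory Num.Theory.

Lemma nth_le_head (l : seq nat) k :
  sorted (fun a b => b < a) l -> nth 0 l k <= head 0 l.
Proof.
elim: l k => [|x l IH] k; first by rewrite nth_nil.
move=> /= Hp; case: k => [|k] /=; first exact: leqnn.
have Hs := path_sorted Hp.
apply: leq_trans (IH k Hs) _.
by case: l Hp {IH Hs} => [|y l] //= /andP[/ltnW].
Qed.

Lemma in_sboxes la mu r c :
  strict_partition la -> in_sdiag la mu (r, c) -> (r, c) \in sboxes la mu.
Proof.
move=> /andP[Hs _] Hd; rewrite mem_filter Hd /=.
move: Hd => /and4P[H1 H2 H3 H4].
have Hh := @nth_le_head la r.-1 Hs.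
apply: (allpairs_f (fun r c => (r, c))); rewrite mem_iota; lia.
Qed.

Theorem mainTheorem8 (la mu : seq nat) :
  strict_partition la -> strict_partition mu -> subpart mu la ->
  (exists i j : nat,
     [&& in_sdiag la mu (i, j), in_sdiag la mu (i, j.+1) & in_sdiag la mu (i.+1, j.+1)]) ->
  ~ p_positive (Qcoef la mu).
Proof.
move=> Hla _ _ [i [j /and3P[D1 D2 D3]]] [s [Hs Heq]].
pose b1 : sbox la mu := SeqSub (@in_sboxes la mu _ _ Hla D1).
pose b2 : sbox la mu := SeqSub (@in_sboxes la mu _ _ Hla D2).
pose b3 : sbox la mu := SeqSub (@in_sboxes la mu _ _ Hla D3).
have noT : forall T : {ffun sbox la mu -> 'I_1 * bool}, is_mtab T = false.
  move=> T; apply/negbTE/negP => /forallP H.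
  have /forallP /(_ b2) /and4P [h1 _ _ h4] := H b1.
  have /forallP /(_ b3) /and4P [_ h2 h3 _] := H b2.
  move: h1 h2 h3 h4; rewrite /= !eqxx ltnSn /=.
  case: (T b1) => [x1 m1]; case: (T b2) => [x2 m2]; case: (T b3) => [x3 m3].
  rewrite (ord1 x1) (ord1 x2) (ord1 x3) /letter_key /=.
  rewrite !neq_ltn !ltnSn /=.
  by case: m1; case: m2; case: m3.

have Q1 : forall alpha, Qcoef la mu 1 alpha = 0.
  by move=> alpha; apply: eq_card0 => T; rewrite inE noT.
have c0 : forall cn, cn \in s -> cn.1 = 0%R.
  move=> cn Hcn.
  pose alpha := fun _ : 'I_1 => \sum_(j < size cn.2) nth 0 cn.2 j.
  have := Heq 1 alpha; rewrite Q1 big_seq => /esym/eqP.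
  rewrite psumr_eq0; last first.
    move=> x Hx; move/allP: Hs => /(_ x Hx) /andP[Hx0 _].
    by rewrite mulr_ge0 // ler0n.
  move=> /allP /(_ cn Hcn); rewrite Hcn /= mulf_eq0 => /orP[/eqP //|].
  rewrite pnatr_eq0 => /eqP Hp; exfalso.
  move: Hp; rewrite /pcoef => /eqP; rewrite cards_eq0 => /eqP /setP /(_ [ffun _ => ord0]).
  rewrite !inE => /negbT /negP; apply; apply/forallP => x.
  rewrite /alpha (ord1 x); apply/eqP; apply: eq_bigl => k; by rewrite ffunE eqxx.
pose K := size la + head 0 la.
have Hb : forall b : sbox la mu, (val b).1 + (val b).2 <= K.*2.
  move=> [[r c] Hrc] /=; move: Hrc; rewrite mem_filter => /andP[_].
  move=> /allpairsP [[x y] [/= Hx Hy [-> ->]]]; move: Hx Hy; rewrite !mem_iota /K; lia.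
pose T : {ffun sbox la mu -> 'I_(K.*2).+1 * bool} :=
  [ffun b => (inord ((val b).1 + (val b).2), false)].
have HT : forall b, nat_of_ord (T b).1 = (val b).1 + (val b).2.
  by move=> b; rewrite ffunE /= inordK // ltnS Hb.
have HTm : forall b, (T b).2 = false by move=> b; rewrite ffunE.
have mt : is_mtab T.
  apply/forallP => x; apply/forallP => y; rewrite /letter_key !HTm !HT.
  rewrite -!(inj_eq val_inj) /= !HT.
  case: x => [[r1 c1] ?]; case: y => [[r2 c2] ?] /=.
  apply/and4P; split; apply/implyP; rewrite ?andbF //=; lia.
pose alpha := fun k : 'I_(K.*2).+1 => #|[set b | (T b).1 == k]|.
have := Heq _ alpha.
rewrite big_seq big1; last by move=> cn Hcn; rewrite c0 // mul0r.
move/eqP; rewrite pnatr_eq0 cards_eq0 => /eqP /setP /(_ T).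
rewrite !inE mt /=; move/negbT/negP; apply; apply/forallP => k; by [].
Qed.
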